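(* Let $\mathcal{L}$ be a Lindbladian on $\mathbb{C}^d$, let $(\pi_t)_{t\ge0}$ be program states on a finite-dimensional space $\mathcal{H}_P$ such that $t\mapsto\pi_t$ is real-analytic on $[0,\infty)$, and let $\mathcal{P}$ be a linear map from operators on $\mathbb{C}^d\otimes\mathcal{H}_P$ to operators on $\mathbb{C}^d$ such that $\mathcal{P}(\cdot\otimes\pi_t)=e^{t\mathcal{L}}$ for all $t\in[0,T]$, for some $T>0$. Then $\mathcal{P}(\cdot\otimes\pi_t)=e^{t\mathcal{L}}$ also holds for every $t\ge T$.
   Context: A Lindbladian has GKSL form $\mathcal{L}(\rho)=-i[H,\rho]+\sum_j\gamma_j(L_j\rho L_j^\dagger-\frac12\{L_j^\dagger L_j,\rho\})$ and generates the semigroup $(e^{t\mathcal{L}})_{t\ge0}$. *)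

(* Defs.v *)
From HB Require Import structures.
From mathcomp Require Import all_boot all_order all_algebra.
From mathcomp Require Import all_classical all_reals all_analysis.
From mathcomp Require Import complex mxtens.
Set Implicit Arguments. Unset Strict Implicit. Unset Printing Implicit Defensive.
Import Order.TTheory GRing.Theory Num.Theory.
Import numFieldTopology.Exports numFieldNormedType.Exports.
Local Open Scope ring_scope.
Local Open Scope complex_scope.
Local Open Scope classical_set_scope.

Section Defs.
Variable R : realType.
Local Notation C := R[i].

Definition adjm m n (A : 'M[C]_(m, n)) : 'M[C]_(n, m) := (map_mx Num.conj A)^T.

Definition hermitian n (A : 'M[C]_n) : Prop := adjm A = A.

Definition psd n (A : 'M[C]_n) : Prop :=
  hermitian A /\ forall v : 'cV[C]_n, 0 <= (adjm v *m A *m v) 0 0.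

Definition density n (A : 'M[C]_n) : Prop := psd A /\ \tr A = 1.

Definition is_lindbladian d (L : 'M[C]_d -> 'M[C]_d) : Prop :=
  exists H : 'M[C]_d, hermitian H /\
  exists (k : nat) (g : 'I_k -> R) (Ls : 'I_k -> 'M[C]_d),
    (forall j, 0 <= g j) /\
    forall rho : 'M[C]_d,
      L rho = - (Complex 0 1) *: (H *m rho - rho *m H)
              + \sum_(j < k) (g j)%:C *:
                  (Ls j *m rho *m adjm (Ls j)
                   - (2%:R)^-1 *: (adjm (Ls j) *m Ls j *m rho
                                   + rho *m (adjm (Ls j) *m Ls j))).

Definition mx_lim m n (u : nat -> 'M[C]_(m, n)) : 'M[C]_(m, n) :=
  \matrix_(i, j) Complex (limn (fun k => complex.Re (u k i j)))
                         (limn (fun k => complex.Im (u k i j))).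

Definition expL d (t : R) (L : 'M[C]_d -> 'M[C]_d) (rho : 'M[C]_d) : 'M[C]_d :=
  mx_lim (fun N => \sum_(k < N) ((t ^+ k / (k`!)%:R)%:C *: iter k L rho)).

Definition real_analytic_on_nonneg (f : R -> R) : Prop :=
  forall t0 : R, 0 <= t0 ->
    exists r : R, 0 < r /\ exists a : nat -> R,
      forall t : R, 0 <= t -> `|t - t0| < r ->
        (fun N => \sum_(k < N) a k * (t - t0) ^+ k) @ \oo --> f t.

Definition mx_real_analytic_on_nonneg m n (f : R -> 'M[C]_(m, n)) : Prop :=
  forall i j, real_analytic_on_nonneg (fun t => complex.Re (f t i j)) /\
              real_analytic_on_nonneg (fun t => complex.Im (f t i j)).

End Defs.

(* Main.v *)
Require Import Defs.
From HB Require Import structures.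
From mathcomp Require Import all_boot all_order all_algebra.
From mathcomp Require Import all_classical all_reals all_analysis.
From mathcomp Require Import complex mxtens.
From mathcomp Require Import ring lra.
Import Order.TTheory GRing.Theory Num.Theory.
Import numFieldTopology.Exports numFieldNormedType.Exports.
Set Implicit Arguments. Unset Strict Implicit. Unset Printing Implicit Defensive.
Local Open Scope ring_scope.
Local Open Scope classical_set_scope.

Lemma ra_add (R : realType) (f g : R -> R) :
  real_analytic_on_nonneg f -> real_analytic_on_nonneg g ->
  real_analytic_on_nonneg (fun t => f t + g t).
Proof.
move=> Hf Hg t0 t0ge.
have [r1 [r1p [a1 Ha1]]] := Hf t0 t0ge.
have [r2 [r2p [a2 Ha2]]] := Hg t0 t0ge.
exists (Num.min r1 r2); split; first by rewrite lt_min r1p r2p.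
exists (fun k => a1 k + a2 k) => t tge; rewrite lt_min => /andP[h1 h2].
have -> : (fun N => \sum_(k < N) (a1 k + a2 k) * (t - t0) ^+ k) =
  (fun N => \sum_(k < N) a1 k * (t - t0) ^+ k + \sum_(k < N) a2 k * (t - t0) ^+ k).
  by apply/funext => N /=; rewrite -big_split; apply: eq_bigr => k _; rewrite mulrDl.
exact: cvgD (Ha1 t tge h1) (Ha2 t tge h2).
Qed.

Lemma ra_scale (R : realType) (c : R) (f : R -> R) :
  real_analytic_on_nonneg f -> real_analytic_on_nonneg (fun t => c * f t).
Proof.
move=> Hf t0 t0ge.
have [r1 [r1p [a1 Ha1]]] := Hf t0 t0ge.
exists r1; split => //.
exists (fun k => c * a1 k) => t tge h1.
have -> : (fun N => \sum_(k < N) (c * a1 k) * (t - t0) ^+ k) =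
  (fun N => c * \sum_(k < N) a1 k * (t - t0) ^+ k).
  by apply/funext => N /=; rewrite mulr_sumr; apply: eq_bigr => k _; rewrite mulrA.
exact: cvgM (cvg_cst c) (Ha1 t tge h1).
Qed.

Lemma ra_zero (R : realType) : real_analytic_on_nonneg (fun _ : R => 0).
Proof.
move=> t0 t0ge; exists 1; split => //; exists (fun _ => 0) => t _ _.
have -> : (fun N => \sum_(k < N) (0:R) * (t - t0) ^+ k) = (fun _ => 0).
  by apply/funext => N; rewrite big1 // => k _; rewrite mul0r.
exact: cvg_cst.
Qed.

Lemma ra_sum (R : realType) (I : Type) (r : seq I) (F : I -> R -> R) :
  (forall i, real_analytic_on_nonneg (F i)) ->
  real_analytic_on_nonneg (fun t => \sum_(i <- r) F i t).
Proof.
move=> HF; elim: r => [|i r IH].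
  have -> : (fun t : R => \sum_(i <- [::]) F i t) = (fun _ => 0).
    by apply/funext => t; rewrite big_nil.
  exact: ra_zero.
have -> : (fun t : R => \sum_(j <- i :: r) F j t) = (fun t => F i t + \sum_(j <- r) F j t).
  by apply/funext => t; rewrite big_cons.
exact: ra_add.
Qed.

Lemma ra_sub (R : realType) (f g : R -> R) :
  real_analytic_on_nonneg f -> real_analytic_on_nonneg g ->
  real_analytic_on_nonneg (fun t => f t - g t).
Proof.
move=> Hf Hg.
have -> : (fun t => f t - g t) = (fun t => f t + (-1) * g t).
  by apply/funext => t; rewrite mulN1r.
by apply: ra_add => //; apply: ra_scale.
Qed.

Lemma geom_le2 (R : realType) (q : R) n : 0 <= q -> q <= 1/2 ->
  \sum_(i < n) q ^+ i <= 2.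
Proof.
move=> q0 q1; elim: n => [|n IH]; first by rewrite big_ord0.
rewrite big_ord_recl expr0.
have -> : \sum_(i < n) q ^+ (bump 0 i) = q * \sum_(i < n) q ^+ i.
  by rewrite mulr_sumr; apply: eq_bigr => i _; rewrite /bump /= add1n exprS.
have s0 : 0 <= \sum_(i < n) q ^+ i by apply: sumr_ge0 => i _; exact: exprn_ge0.
nra.
Qed.

Lemma ra_identity (R : realType) (h : R -> R) (T : R) :
  real_analytic_on_nonneg h -> 0 < T ->
  (forall t, 0 <= t -> t <= T -> h t = 0) ->
  forall t, 0 <= t -> h t = 0.
Proof.
move=> Hh T0 HT t t0; apply/eqP; apply: contraT => Hnz.
pose A := [set s : R | 0 <= s /\ forall u, 0 <= u -> u <= s -> h u = 0].
have AT : A T by split; [exact: ltW | exact: HT].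
have Aub : forall s, A s -> s < t.
  move=> s [s0 Hs]; rewrite ltNge; apply/negP => ts.
  by move: Hnz; rewrite (Hs t t0 ts) eqxx.
have supA : has_sup A by split; [exists T | exists t => s /Aub/ltW].
set S := sup A.
have TS : T <= S := sup_upper_bound supA AT.
have S0 : 0 < S := lt_le_trans T0 TS.
have below : forall u, 0 <= u -> u < S -> h u = 0.
  move=> u u0 uS.
  have [s [s0 Hs] us] := @sup_adherent R A (S - u) ltac:(rewrite subr_gt0 //) supA.
  apply: Hs => //; rewrite -/S in us; lra.
have [r [r0 [a Ha]]] := Hh S (ltW S0).
pose rho := Num.min r S / 2.
have rho0 : 0 < rho by rewrite /rho divr_gt0 // lt_min r0 S0.
have rhor : rho < r.
  have : Num.min r S <= r by rewrite ge_min lexx.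
  rewrite /rho; lra.
have rhoS : rho < S.
  have : Num.min r S <= S by rewrite ge_min lexx orbT.
  rewrite /rho; lra.
have cv1 : (fun N => \sum_(k < N) a k * (- rho) ^+ k) @ \oo --> 0.
  have e : S - rho - S = - rho by ring.
  have := Ha (S - rho) ltac:(lra) ltac:(rewrite e normrN gtr0_norm //).
  rewrite (below (S - rho)); [|lra|lra].
  by rewrite e.
have cv1' : cvgn (series (fun k => a k * (- rho) ^+ k)).
  apply/cvg_ex; exists 0.
  have -> : series (fun k => a k * (- rho) ^+ k) = (fun N => \sum_(k < N) a k * (- rho) ^+ k).
    by apply/funext => N; rewrite /series /= big_mkord.
  exact: cv1.
have [M HM] := cvg_has_ub (cvgP _ (cvg_series_cvg_0 cv1')).
have Mk : forall k, `|a k| * rho ^+ k <= M.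
  move=> k; have := HM (`|a k * (- rho) ^+ k|) (ex_intro2 _ _ k I erefl).
  by rewrite normrM normrX normrN (gtr0_norm rho0).
have M0 : 0 <= M by apply: le_trans (Mk 0%N); rewrite expr0 mulr1.
have azero : forall k, a k = 0.
  elim/ltn_ind => k IH.
  have key : forall y, 0 < y -> y <= rho / 2 ->
      `|a k| * y ^+ k * rho ^+ k.+1 <= 2 * M * y ^+ k.+1.
    move=> y y0 yr.
    have e : S - y - S = - y by ring.
    have cvy := Ha (S - y) ltac:(lra) ltac:(rewrite e normrN gtr0_norm //; lra).
    rewrite (below (S - y)) in cvy; [|lra|lra]. rewrite e in cvy.
    have P0 : 0 < rho ^+ k.+1 := exprn_gt0 _ rho0.
    have tail : forall n, `|\sum_(i < n) a (k.+1 + i)%N * (- y) ^+ (k.+1 + i)| * rho ^+ k.+1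
                 <= 2 * M * y ^+ k.+1.
      move=> n.
      apply: (@le_trans _ _ ((\sum_(i<n) M * (y / rho) ^+ (k.+1 + i)) * rho^+k.+1)).
      - apply: ler_wpM2r; first exact: ltW.
        apply: le_trans (ler_norm_sum _ _ _) _; apply: ler_sum => i _.
        rewrite normrM normrX normrN (gtr0_norm y0) expr_div_n.
        have := Mk (k.+1 + i)%N. set j := (k.+1 + i)%N.
        have rj : 0 < rho ^+ j := exprn_gt0 _ rho0.
        have yj : 0 <= y ^+ j := exprn_ge0 _ (ltW y0).
        rewrite mulrA ler_pdivlMr // => H.
        nra.
      - have -> : \sum_(i<n) M * (y/rho)^+(k.+1+i) = M * (y/rho)^+k.+1 * \sum_(i<n) (y/rho)^+i.
          by rewrite mulr_sumr; apply: eq_bigr => i _; rewrite exprD mulrA.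
        have q0 : 0 <= y / rho by rewrite divr_ge0 // ltW.
        have q1 : y / rho <= 1/2 by rewrite ler_pdivrMr //; lra.
        have g := @geom_le2 _ (y/rho) n q0 q1.
        have s0 : 0 <= \sum_(i<n) (y/rho)^+i by apply: sumr_ge0 => i _; exact: exprn_ge0.
        rewrite expr_div_n.
        have Y0 : 0 <= y ^+ k.+1 := exprn_ge0 _ (ltW y0).
        have -> : M * (y ^+ k.+1 / rho ^+ k.+1) * (\sum_(i<n) (y/rho)^+i) * rho ^+ k.+1 =
                  M * y ^+ k.+1 * \sum_(i<n) (y/rho)^+i.
          by field; rewrite gt_eqF.
        have MY : 0 <= M * y ^+ k.+1 by apply: mulr_ge0.
        nra.
    rewrite leNgt; apply/negP => Hlt.
    pose eps := (`|a k| * y ^+ k * rho ^+ k.+1 - 2 * M * y ^+ k.+1) / rho ^+ k.+1.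
    have eps0 : 0 < eps by rewrite /eps divr_gt0 // subr_gt0.
    have [N0 _ HN0] := cvgr0_norm_lt _ cvy _ eps0.
    have := HN0 (k.+1 + N0)%N ltac:(rewrite /= leq_addl //).
    rewrite big_split_ord /= big_ord_recr /= big1 ?add0r; last first.
      by move=> i _; rewrite IH ?mul0r.
    set z := a k * (- y) ^+ k.
    set tl := \sum_(i < N0) _.
    move=> H.
    have t2 := tail N0.
    have tri : `|z| <= `|z + tl| + `|tl|.
      by rewrite -{1}(addrK tl z) ler_normB.
    have nz : `|z| = `|a k| * y ^+ k by rewrite /z normrM normrX normrN (gtr0_norm y0).
    rewrite nz in tri.
    have : eps * rho ^+ k.+1 = `|a k| * y ^+ k * rho ^+ k.+1 - 2 * M * y ^+ k.+1.
      by rewrite /eps; field; rewrite gt_eqF.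
    rewrite -/tl in t2.
    have h1 : `|z + tl| * rho ^+ k.+1 < eps * rho ^+ k.+1 by rewrite ltr_pM2r.
    have h2 : `|a k| * y ^+ k * rho ^+ k.+1 <= (`|z + tl| + `|tl|) * rho ^+ k.+1.
      by rewrite ler_pM2r.
    lra.
  apply/eqP; rewrite -normr_eq0 eq_le normr_ge0 andbT.
  have P0 : 0 < rho ^+ k.+1 := exprn_gt0 _ rho0.
  apply/ler_addgt0Pr => e e0; rewrite add0r.
  pose y := Num.min (rho/2) (e * rho ^+ k.+1 / (2*M+1)).
  have y0 : 0 < y by rewrite lt_min; apply/andP; split; [rewrite divr_gt0 // | apply: divr_gt0; [exact: mulr_gt0 | lra]].
  have y1 : y <= rho / 2 by rewrite ge_min lexx.
  have y2 : y * (2 * M + 1) <= e * rho ^+ k.+1.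
    rewrite -ler_pdivlMr; last lra.
    by rewrite ge_min lexx orbT.
  have := key y y0 y1.
  rewrite (exprSr y k).
  have Y0 : 0 < y ^+ k := exprn_gt0 _ y0.
  move=> H.
  have H2 : y ^+ k * (`|a k| * rho ^+ k.+1) <= y ^+ k * (2 * M * y).
    have -> : y ^+ k * (`|a k| * rho ^+ k.+1) = `|a k| * y ^+ k * rho ^+ k.+1 by ring.
    have -> : y ^+ k * (2 * M * y) = 2 * M * (y ^+ k * y) by ring.
    exact: H.
  rewrite ler_pM2l // in H2.
  have H3 : `|a k| * rho ^+ k.+1 <= e * rho ^+ k.+1 by nra.
  by rewrite ler_pM2r // in H3.
have above : forall u, S <= u -> u < S + r -> h u = 0.
  move=> u Su ur.
  have := Ha u ltac:(lra) ltac:(rewrite ger0_norm; lra).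
  have -> : (fun N => \sum_(k < N) a k * (u - S) ^+ k) = (fun _ => 0).
    by apply/funext => N; rewrite big1 // => k _; rewrite azero mul0r.
  move=> H; apply: esym; exact: (cvg_unique _ (cvg_cst 0) H).
have As : A (S + r / 2).
  split; first lra.
  move=> u u0 uS'; case: (ltP u S) => [uS|Su]; first exact: below.
  apply: above => //; lra.
have := sup_upper_bound supA As; rewrite -/S => H.
suff : False by [].
lra.
Qed.
Local Open Scope complex_scope.

Lemma ReD (R : realType) (x y : R[i]) : complex.Re (x + y) = complex.Re x + complex.Re y.
Proof. by case: x; case: y. Qed.
Lemma ImD (R : realType) (x y : R[i]) : complex.Im (x + y) = complex.Im x + complex.Im y.
Proof. by case: x; case: y. Qed.
Lemma ReN (R : realType) (x : R[i]) : complex.Re (- x) = - complex.Re x.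
Proof. by case: x. Qed.
Lemma ImN (R : realType) (x : R[i]) : complex.Im (- x) = - complex.Im x.
Proof. by case: x. Qed.
Lemma ReB (R : realType) (x y : R[i]) : complex.Re (x - y) = complex.Re x - complex.Re y.
Proof. by rewrite ReD ReN. Qed.
Lemma ImB (R : realType) (x y : R[i]) : complex.Im (x - y) = complex.Im x - complex.Im y.
Proof. by rewrite ImD ImN. Qed.
Lemma ReM (R : realType) (x y : R[i]) :
  complex.Re (x * y) = complex.Re x * complex.Re y - complex.Im x * complex.Im y.
Proof. by case: x => a b; case: y => c e. Qed.
Lemma ImM (R : realType) (x y : R[i]) :
  complex.Im (x * y) = complex.Re x * complex.Im y + complex.Im x * complex.Re y.
Proof. by case: x => a b; case: y => c e. Qed.
Lemma Re0 (R : realType) : complex.Re (0 : R[i]) = 0. Proof. by []. Qed.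
Lemma Im0 (R : realType) : complex.Im (0 : R[i]) = 0. Proof. by []. Qed.
Lemma ReRM (R : realType) (r : R) (x : R[i]) : complex.Re (r%:C * x) = r * complex.Re x.
Proof. by rewrite ReM /= mul0r subr0. Qed.
Lemma ImRM (R : realType) (r : R) (x : R[i]) : complex.Im (r%:C * x) = r * complex.Im x.
Proof. by rewrite ImM /= mul0r addr0. Qed.
Lemma Re_sum (R : realType) (I : Type) (r : seq I) (F : I -> R[i]) :
  complex.Re (\sum_(i <- r) F i) = \sum_(i <- r) complex.Re (F i).
Proof. by elim: r => [|i r IH]; rewrite ?big_nil // !big_cons ReD IH. Qed.
Lemma Im_sum (R : realType) (I : Type) (r : seq I) (F : I -> R[i]) :
  complex.Im (\sum_(i <- r) F i) = \sum_(i <- r) complex.Im (F i).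
Proof. by elim: r => [|i r IH]; rewrite ?big_nil // !big_cons ImD IH. Qed.

Definition nrm (R : realType) (z : R[i]) : R := `|complex.Re z| + `|complex.Im z|.

Lemma nrm_ge0 (R : realType) (z : R[i]) : 0 <= nrm z.
Proof. by rewrite /nrm addr_ge0. Qed.
Lemma nrmD (R : realType) (x y : R[i]) : nrm (x + y) <= nrm x + nrm y.
Proof.
rewrite /nrm ReD ImD.
have := ler_normD (complex.Re x) (complex.Re y).
have := ler_normD (complex.Im x) (complex.Im y). lra.
Qed.
Lemma nrmN (R : realType) (x : R[i]) : nrm (- x) = nrm x.
Proof. by rewrite /nrm ReN ImN !normrN. Qed.
Lemma nrm0 (R : realType) : nrm (0 : R[i]) = 0.
Proof. by rewrite /nrm Re0 Im0 normr0 addr0. Qed.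
Lemma nrmM (R : realType) (x y : R[i]) : nrm (x * y) <= nrm x * nrm y.
Proof.
rewrite /nrm ReM ImM.
set a := complex.Re x; set b := complex.Im x; set c := complex.Re y; set e := complex.Im y.
have h1 := ler_normB (a * c) (b * e).
have h2 := ler_normD (a * e) (b * c).
rewrite !normrM in h1 h2.
have := normr_ge0 a; have := normr_ge0 b; have := normr_ge0 c; have := normr_ge0 e.
nra.
Qed.
Lemma nrmRM (R : realType) (r : R) (x : R[i]) : nrm (r%:C * x) = `|r| * nrm x.
Proof. by rewrite /nrm ReRM ImRM !normrM mulrDr. Qed.
Lemma Re_le_nrm (R : realType) (x : R[i]) : `|complex.Re x| <= nrm x.
Proof. by rewrite /nrm lerDl. Qed.
Lemma Im_le_nrm (R : realType) (x : R[i]) : `|complex.Im x| <= nrm x.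
Proof. by rewrite /nrm lerDr. Qed.

Definition NM (R : realType) m n (X : 'M[R[i]]_(m, n)) : R :=
  \sum_(i < m) \sum_(j < n) nrm (X i j).

Lemma NM_ge0 (R : realType) m n (X : 'M[R[i]]_(m, n)) : 0 <= NM X.
Proof. by apply: sumr_ge0 => i _; apply: sumr_ge0 => j _; exact: nrm_ge0. Qed.

Lemma NMD (R : realType) m n (X Y : 'M[R[i]]_(m, n)) : NM (X + Y) <= NM X + NM Y.
Proof.
rewrite /NM -big_split /=; apply: ler_sum => i _.
rewrite -big_split /=; apply: ler_sum => j _; rewrite mxE; exact: nrmD.
Qed.

Lemma NMN (R : realType) m n (X : 'M[R[i]]_(m, n)) : NM (- X) = NM X.
Proof. by apply: eq_bigr => i _; apply: eq_bigr => j _; rewrite mxE nrmN. Qed.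

Lemma NM0 (R : realType) m n : NM (0 : 'M[R[i]]_(m, n)) = 0.
Proof. by rewrite /NM big1 // => i _; rewrite big1 // => j _; rewrite mxE nrm0. Qed.

Lemma NMB (R : realType) m n (X Y : 'M[R[i]]_(m, n)) : NM (X - Y) = NM (Y - X).
Proof. by rewrite -NMN opprB. Qed.

Lemma NMZ (R : realType) m n (c : R[i]) (X : 'M[R[i]]_(m, n)) : NM (c *: X) <= nrm c * NM X.
Proof.
rewrite /NM mulr_sumr; apply: ler_sum => i _; rewrite mulr_sumr; apply: ler_sum => j _.
rewrite mxE; exact: nrmM.
Qed.

Lemma NMRZ (R : realType) m n (r : R) (X : 'M[R[i]]_(m, n)) : NM (r%:C *: X) = `|r| * NM X.
Proof.
rewrite /NM mulr_sumr; apply: eq_bigr => i _; rewrite mulr_sumr; apply: eq_bigr => j _.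
by rewrite mxE nrmRM.
Qed.

Lemma NM_sum (R : realType) m n (I : Type) (r : seq I) (F : I -> 'M[R[i]]_(m, n)) :
  NM (\sum_(i <- r) F i) <= \sum_(i <- r) NM (F i).
Proof.
elim: r => [|i r IH]; first by rewrite !big_nil NM0.
rewrite !big_cons; apply: le_trans (NMD _ _) _; exact: lerD.
Qed.

Lemma Re_le_NM (R : realType) m n (X : 'M[R[i]]_(m, n)) i j : `|complex.Re (X i j)| <= NM X.
Proof.
apply: le_trans (Re_le_nrm _) _.
rewrite /NM (bigD1 i) //= (bigD1 j) //=.
rewrite -addrA lerDl addr_ge0 //.
  by apply: sumr_ge0 => k _; exact: nrm_ge0.
by apply: sumr_ge0 => k _; apply: sumr_ge0 => l _; exact: nrm_ge0.
Qed.

Lemma Im_le_NM (R : realType) m n (X : 'M[R[i]]_(m, n)) i j : `|complex.Im (X i j)| <= NM X.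
Proof.
apply: le_trans (Im_le_nrm _) _.
rewrite /NM (bigD1 i) //= (bigD1 j) //=.
rewrite -addrA lerDl addr_ge0 //.
  by apply: sumr_ge0 => k _; exact: nrm_ge0.
by apply: sumr_ge0 => k _; apply: sumr_ge0 => l _; exact: nrm_ge0.
Qed.

Lemma lind_lin (R : realType) d (L : 'M[R[i]]_d -> 'M[R[i]]_d) :
  is_lindbladian L ->
  (forall X Y, L (X + Y) = L X + L Y) /\ (forall c X, L (c *: X) = c *: L X).
Proof.
move=> [H [_ [k [g [Ls [_ HL]]]]]].
split.
- move=> X Y; rewrite !HL.
  rewrite mulmxDr mulmxDl (opprD (X *m H)) (addrACA (H *m X)) scalerDr.
  rewrite addrACA; congr (_ + _).
  rewrite -big_split; apply: eq_bigr => j _ /=.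
  set B := Ls j; set B' := adjm B; set A := B' *m B.
  rewrite (mulmxDr B X Y) (mulmxDl (B *m X) (B *m Y) B') (mulmxDr A X Y) (mulmxDl X Y A).
  rewrite (addrACA (A *m X)) (scalerDr ((2%:R : R[i])^-1)) (opprD (2^-1 *: (A *m X + X *m A))).
  by rewrite (addrACA (B *m X *m B')) scalerDr.
- move=> c X; rewrite !HL.
  rewrite (scalerDr c) scaler_sumr; congr (_ + _).
    by rewrite -(scalemxAr c H X) -(scalemxAl c X H) -(scalerBr c) !scalerA mulrC.
  apply: eq_bigr => j _.
  rewrite scalerA mulrC -scalerA; congr (_ *: _).
  set B := Ls j; set B' := adjm B; set A := B' *m B.
  rewrite -(scalemxAr c B X) -(scalemxAl c (B *m X) B') -(scalemxAr c A X) -(scalemxAl c X A).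
  rewrite -(scalerDr c) (scalerA ((2%:R : R[i])^-1)) mulrC -scalerA.
  by rewrite -(scalerBr c).
Qed.

Definition linL (R : realType) d (L : 'M[R[i]]_d -> 'M[R[i]]_d) :=
  (forall X Y, L (X + Y) = L X + L Y) /\ (forall c X, L (c *: X) = c *: L X).

Lemma linL_iter (R : realType) d (L : 'M[R[i]]_d -> 'M[R[i]]_d) k :
  linL L -> linL (iter k L).
Proof.
move=> [LD LZ]; elim: k => [|k [ID IZ]]; first by split.
by split => [X Y|c X] /=; rewrite ?ID ?IZ ?LD ?LZ.
Qed.

Lemma linL0 (R : realType) d (L : 'M[R[i]]_d -> 'M[R[i]]_d) : linL L -> L 0 = 0.
Proof. by move=> [_ LZ]; have := LZ 0 0; rewrite !scale0r. Qed.

Lemma linLN (R : realType) d (L : 'M[R[i]]_d -> 'M[R[i]]_d) X : linL L -> L (- X) = - L X.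
Proof. by move=> [_ LZ]; rewrite -scaleN1r LZ scaleN1r. Qed.

Lemma linLB (R : realType) d (L : 'M[R[i]]_d -> 'M[R[i]]_d) X Y : linL L -> L (X - Y) = L X - L Y.
Proof. by move=> hL; rewrite hL.1 linLN. Qed.

Lemma linL_sum (R : realType) d (L : 'M[R[i]]_d -> 'M[R[i]]_d) (I : Type) (r : seq I) F :
  linL L -> L (\sum_(i <- r) F i) = \sum_(i <- r) L (F i).
Proof.
move=> hL; elim: r => [|i r IH]; first by rewrite !big_nil linL0.
by rewrite !big_cons hL.1 IH.
Qed.

Lemma term_le_dsum (R : realType) m n (F : 'I_m -> 'I_n -> R) i j :
  (forall i j, 0 <= F i j) -> F i j <= \sum_(i < m) \sum_(j < n) F i j.
Proof.
move=> F0; rewrite (bigD1 i) //= (bigD1 j) //=.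
rewrite -addrA lerDl addr_ge0 //.
  by apply: sumr_ge0 => k _.
by apply: sumr_ge0 => k _; apply: sumr_ge0 => l _.
Qed.

Lemma linL_bound (R : realType) d (L : 'M[R[i]]_d -> 'M[R[i]]_d) :
  linL L -> exists M : R, 0 <= M /\ forall X, NM (L X) <= M * NM X.
Proof.
move=> hL.
exists (\sum_(i < d) \sum_(j < d) NM (L (delta_mx i j))); split.
  by apply: sumr_ge0 => i _; apply: sumr_ge0 => j _; exact: NM_ge0.
move=> X; rewrite {1}(matrix_sum_delta X) linL_sum //.
under eq_bigr do rewrite linL_sum //.
apply: le_trans (NM_sum _ _) _.
apply: le_trans (ler_sum _ (fun i _ => NM_sum _ _)) _.
have -> : NM X = \sum_i \sum_j nrm (X i j) by [].
rewrite mulr_sumr; apply: ler_sum => i _; rewrite mulr_sumr; apply: ler_sum => j _.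
rewrite hL.2; apply: le_trans (NMZ _ _) _.
rewrite mulrC; apply: ler_wpM2r; first exact: nrm_ge0.
apply: (@term_le_dsum _ _ _ (fun a b => NM (L (delta_mx a b))) i j) => a b; exact: NM_ge0.
Qed.

Lemma iter_bound (R : realType) d (L : 'M[R[i]]_d -> 'M[R[i]]_d) (M : R) k X :
  0 <= M -> (forall X, NM (L X) <= M * NM X) -> NM (iter k L X) <= M ^+ k * NM X.
Proof.
move=> M0 HM; elim: k => [|k IH]; first by rewrite expr0 mul1r.
rewrite /= exprS -mulrA; apply: le_trans (HM _) _; exact: ler_wpM2l.
Qed.

Definition Eps (R : realType) d (L : 'M[R[i]]_d -> 'M[R[i]]_d) (rho : 'M[R[i]]_d) (t : R) N :
  'M[R[i]]_d := \sum_(k < N) ((t ^+ k / (k`!)%:R)%:C *: iter k L rho).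

Lemma expL_Eps (R : realType) d (L : 'M[R[i]]_d -> 'M[R[i]]_d) rho t :
  expL t L rho = mx_lim (Eps L rho t).
Proof. by []. Qed.

Lemma Eps_entry (R : realType) d (L : 'M[R[i]]_d -> 'M[R[i]]_d) rho t N i j :
  Eps L rho t N i j = \sum_(k < N) (t ^+ k / (k`!)%:R)%:C * iter k L rho i j.
Proof. by rewrite /Eps summxE; apply: eq_bigr => k _; rewrite mxE. Qed.

Lemma coeff_norm (R : realType) (t M : R) k : 0 <= M ->
  `|t ^+ k / (k`!)%:R| * M ^+ k = exp_coeff (`|t| * M) k.
Proof.
move=> M0; rewrite /exp_coeff /= normrM normfV normrX normr_nat exprMn.
by rewrite mulrAC.
Qed.

Lemma series_exp_cvg (R : realType) (c : R) :
  series (exp_coeff c) n @[n --> \oo] --> expR c.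
Proof. exact: is_cvg_series_exp_coeff. Qed.

Lemma series_exp_le (R : realType) (c : R) n : 0 <= c -> series (exp_coeff c) n <= expR c.
Proof.
move=> c0; apply: nondecreasing_cvgn_le; last exact: is_cvg_series_exp_coeff.
apply: nondecreasing_series => k _ _; exact: exp_coeff_ge0.
Qed.

Lemma Re_Eps_cvg (R : realType) d (L : 'M[R[i]]_d -> 'M[R[i]]_d) (M : R) rho t i j :
  0 <= M -> (forall X, NM (L X) <= M * NM X) ->
  (fun N => complex.Re (Eps L rho t N i j)) @ \oo --> complex.Re (expL t L rho i j).
Proof.
move=> M0 HM.
have -> : complex.Re (expL t L rho i j) = limn (fun N => complex.Re (Eps L rho t N i j)).
  by rewrite /expL /mx_lim mxE.
pose u := fun k => t ^+ k / (k`!)%:R * complex.Re (iter k L rho i j).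
have -> : (fun N => complex.Re (Eps L rho t N i j)) = series u.
  apply/funext => N; rewrite Eps_entry Re_sum /series /= big_mkord.
  by apply: eq_bigr => k _; rewrite ReRM.
apply: normed_cvg.
apply: (@series_le_cvg _ _ (fun k => exp_coeff (`|t| * M) k * NM rho)).
- by move=> k /=.
- by move=> k; rewrite mulr_ge0 ?NM_ge0 // exp_coeff_ge0 // mulr_ge0.
- move=> k /=; rewrite /u normrM -coeff_norm // -mulrA; apply: ler_wpM2l => //.
  apply: le_trans (Re_le_NM _ i j) _; exact: iter_bound.
- have -> : series (fun k => exp_coeff (`|t| * M) k * NM rho) =
            (fun n => series (exp_coeff (`|t| * M)) n * NM rho).
    by apply/funext => n; rewrite /series /= big_distrl.
  apply/cvg_ex; exists (expR (`|t| * M) * NM rho).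
  apply: cvgM; [exact: series_exp_cvg | exact: cvg_cst].
Qed.

Lemma Im_Eps_cvg (R : realType) d (L : 'M[R[i]]_d -> 'M[R[i]]_d) (M : R) rho t i j :
  0 <= M -> (forall X, NM (L X) <= M * NM X) ->
  (fun N => complex.Im (Eps L rho t N i j)) @ \oo --> complex.Im (expL t L rho i j).
Proof.
move=> M0 HM.
have -> : complex.Im (expL t L rho i j) = limn (fun N => complex.Im (Eps L rho t N i j)).
  by rewrite /expL /mx_lim mxE.
pose u := fun k => t ^+ k / (k`!)%:R * complex.Im (iter k L rho i j).
have -> : (fun N => complex.Im (Eps L rho t N i j)) = series u.
  apply/funext => N; rewrite Eps_entry Im_sum /series /= big_mkord.
  by apply: eq_bigr => k _; rewrite ImRM.
apply: normed_cvg.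
apply: (@series_le_cvg _ _ (fun k => exp_coeff (`|t| * M) k * NM rho)).
- by move=> k /=.
- by move=> k; rewrite mulr_ge0 ?NM_ge0 // exp_coeff_ge0 // mulr_ge0.
- move=> k /=; rewrite /u normrM -coeff_norm // -mulrA; apply: ler_wpM2l => //.
  apply: le_trans (Im_le_NM _ i j) _; exact: iter_bound.
- have -> : series (fun k => exp_coeff (`|t| * M) k * NM rho) =
            (fun n => series (exp_coeff (`|t| * M)) n * NM rho).
    by apply/funext => n; rewrite /series /= big_distrl.
  apply/cvg_ex; exists (expR (`|t| * M) * NM rho).
  apply: cvgM; [exact: series_exp_cvg | exact: cvg_cst].
Qed.

Lemma cvg_big0 (R : realType) (I : Type) (r : seq I) (F : I -> nat -> R) :
  (forall i, F i n @[n --> \oo] --> 0) -> (\sum_(i <- r) F i n) @[n --> \oo] --> 0.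
Proof.
move=> HF; elim: r => [|i r IH].
  have -> : (fun n => \sum_(i <- [::]) F i n) = (fun _ => 0) by apply/funext => n; rewrite big_nil.
  exact: cvg_cst.
have -> : (fun n => \sum_(j <- i :: r) F j n) = (fun n => F i n + \sum_(j <- r) F j n).
  by apply/funext => n; rewrite big_cons.
have H0 := cvgD (HF i) IH; rewrite addr0 in H0; exact: H0.
Qed.

Lemma cvg_absdiff (R : realType) (u : nat -> R) l :
  u n @[n --> \oo] --> l -> `|u n - l| @[n --> \oo] --> 0.
Proof.
move=> H; have := cvg_norm (cvgB H (cvg_cst l)); rewrite subrr normr0; exact.
Qed.

Lemma Eps_NM_cvg (R : realType) d (L : 'M[R[i]]_d -> 'M[R[i]]_d) (M : R) rho t :
  0 <= M -> (forall X, NM (L X) <= M * NM X) ->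
  NM (Eps L rho t N - expL t L rho) @[N --> \oo] --> 0.
Proof.
move=> M0 HM.
have -> : (fun N => NM (Eps L rho t N - expL t L rho)) =
  (fun N => \sum_(i < d) \sum_(j < d)
     (`|complex.Re (Eps L rho t N i j) - complex.Re (expL t L rho i j)| +
      `|complex.Im (Eps L rho t N i j) - complex.Im (expL t L rho i j)|)).
  apply/funext => N; apply: eq_bigr => i _; apply: eq_bigr => j _.
  have e : (Eps L rho t N - expL t L rho) i j = Eps L rho t N i j - expL t L rho i j.
    by rewrite !mxE.
  by rewrite /nrm e ReB ImB.
apply: (@cvg_big0 _ _ _ (fun i N => \sum_(j < d)
     (`|complex.Re (Eps L rho t N i j) - complex.Re (expL t L rho i j)| +
      `|complex.Im (Eps L rho t N i j) - complex.Im (expL t L rho i j)|))) => i.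
apply: (@cvg_big0 _ _ _ (fun j N =>
     (`|complex.Re (Eps L rho t N i j) - complex.Re (expL t L rho i j)| +
      `|complex.Im (Eps L rho t N i j) - complex.Im (expL t L rho i j)|))) => j.
rewrite -(addr0 0); apply: cvgD; apply: cvg_absdiff.
  exact: Re_Eps_cvg M0 HM.
exact: Im_Eps_cvg M0 HM.
Qed.

Lemma tri_sum (V : zmodType) (f : nat -> nat -> V) N :
  \sum_(m < N) \sum_(j < m.+1) f j (m - j)%N = \sum_(j < N) \sum_(k < N - j) f j k.
Proof.
elim: N => [|N IH]; first by rewrite !big_ord0.
rewrite big_ord_recr /= IH.
have -> : \sum_(j < N.+1) \sum_(k < N.+1 - j) f j k =
          \sum_(j < N.+1) (\sum_(k < N - j) f j k + f j (N - j)%N).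
  by apply: eq_bigr => j _; rewrite subSn ?leq_ord // big_ord_recr.
rewrite big_split /= [in RHS]big_ord_recr /= subnn big_ord0 addr0.
congr (_ + _); by apply: eq_bigr.
Qed.

Lemma split_diff (V : zmodType) (f : nat -> nat -> V) N :
  \sum_(j < N) \sum_(k < N) f j k - \sum_(m < N) \sum_(j < m.+1) f j (m - j)%N =
  \sum_(j < N) \sum_(N - j <= k < N) f j k.
Proof.
rewrite tri_sum -sumrB; apply: eq_bigr => j _.
rewrite -!(big_mkord xpredT) (big_cat_nat (leq0n (N - j)) (leq_subr j N)) /=.
by rewrite addrC addrK.
Qed.

Lemma expc_add (R : realType) (a b : R) m :
  (a + b) ^+ m / (m`!)%:R =
  \sum_(j < m.+1) (a ^+ j / (j`!)%:R) * (b ^+ (m - j) / ((m - j)`!)%:R).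
Proof.
rewrite addrC exprDn mulr_suml; apply: eq_bigr => j _.
have := bin_fact (leq_ord j).
move/(congr1 (fun n => n%:R : R)); rewrite !natrM => H.
rewrite -mulr_natr -H.
have f1 : (j`!)%:R != 0 :> R by rewrite pnatr_eq0 -lt0n fact_gt0.
have f2 : ((m - j)`!)%:R != 0 :> R by rewrite pnatr_eq0 -lt0n fact_gt0.
have f3 : ('C(m, j))%:R != 0 :> R by rewrite pnatr_eq0 -lt0n bin_gt0 leq_ord.
by field; rewrite f1 f2 f3.
Qed.

Definition wt (R : realType) d (L : 'M[R[i]]_d -> 'M[R[i]]_d) rho (t0 x : R) j k :=
  ((x ^+ j / (j`!)%:R) * (t0 ^+ k / (k`!)%:R))%:C *: iter (j + k)%N L rho.

Lemma Eps_double (R : realType) d (L : 'M[R[i]]_d -> 'M[R[i]]_d) rho t0 x N : linL L ->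
  Eps L (Eps L rho t0 N) x N = \sum_(j < N) \sum_(k < N) wt L rho t0 x j k.
Proof.
move=> hL; rewrite /Eps; apply: eq_bigr => j _.
rewrite linL_sum; last exact: linL_iter.
rewrite scaler_sumr; apply: eq_bigr => k _.
rewrite (linL_iter j hL).2 scalerA -rmorphM -iterD.
by [].
Qed.

Lemma Eps_add (R : realType) d (L : 'M[R[i]]_d -> 'M[R[i]]_d) rho t0 x N :
  Eps L rho (t0 + x) N = \sum_(m < N) \sum_(j < m.+1) wt L rho t0 x j (m - j)%N.
Proof.
rewrite /Eps; apply: eq_bigr => m _.
rewrite addrC expc_add rmorph_sum scaler_suml; apply: eq_bigr => j _.
by rewrite /wt subnKC // leq_ord.
Qed.

Lemma E1gen (R : realType) (a b K : R) N :
  \sum_(j < N) \sum_(k < N) (exp_coeff a j * exp_coeff b k * K) =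
  K * (series (exp_coeff a) N * series (exp_coeff b) N).
Proof.
rewrite /series /= !big_mkord mulr_suml mulr_sumr; apply: eq_bigr => j _.
rewrite mulr_sumr mulr_sumr; apply: eq_bigr => k _; ring.
Qed.

Lemma E2gen (R : realType) (a b K : R) N :
  \sum_(m < N) \sum_(j < m.+1) (exp_coeff a j * exp_coeff b (m - j)%N * K) =
  K * series (exp_coeff (a + b)) N.
Proof.
rewrite /series /= big_mkord mulr_sumr; apply: eq_bigr => m _.
rewrite /exp_coeff /= expc_add mulr_sumr; apply: eq_bigr => j _; rewrite /=; ring.
Qed.

Lemma term2_bound (R : realType) d (L : 'M[R[i]]_d -> 'M[R[i]]_d) (M : R) rho t0 x N :
  linL L -> 0 <= M -> (forall X, NM (L X) <= M * NM X) ->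
  NM (Eps L (Eps L rho t0 N) x N - Eps L rho (t0 + x) N) <=
  NM rho * (series (exp_coeff (`|x| * M)) N * series (exp_coeff (`|t0| * M)) N
            - series (exp_coeff (`|x| * M + `|t0| * M)) N).
Proof.
move=> hL M0 HM.
rewrite mulrBr -E1gen -E2gen.
rewrite (split_diff (fun j k => exp_coeff (`|x| * M) j * exp_coeff (`|t0| * M) k * NM rho)).
rewrite Eps_double // Eps_add split_diff.
apply: le_trans (NM_sum _ _) _.
apply: le_trans (ler_sum _ (fun j _ => NM_sum _ _)) _.
apply: ler_sum => j _; apply: ler_sum => k _.
rewrite /wt NMRZ.
apply: le_trans (ler_wpM2l (normr_ge0 _) (@iter_bound _ _ L M (j + k)%N rho M0 HM)) _.
rewrite -(coeff_norm x j M0) -(coeff_norm t0 k M0) normrM exprD.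
rewrite le_eqVlt; apply/orP; left; apply/eqP; ring.
Qed.

Lemma tri3 (V : zmodType) (A B C D : V) : A - D = (A - B) + (B - C) + (C - D).
Proof. by rewrite !subrKA. Qed.

Lemma Eps_B (R : realType) d (L : 'M[R[i]]_d -> 'M[R[i]]_d) Y Z x N : linL L ->
  Eps L Y x N - Eps L Z x N = Eps L (Y - Z) x N.
Proof.
move=> hL; rewrite /Eps -sumrB; apply: eq_bigr => k _.
by rewrite (linLB _ _ (linL_iter k hL)) scalerBr.
Qed.

Lemma Eps_NM_le (R : realType) d (L : 'M[R[i]]_d -> 'M[R[i]]_d) (M : R) Y x N :
  0 <= M -> (forall X, NM (L X) <= M * NM X) ->
  NM (Eps L Y x N) <= series (exp_coeff (`|x| * M)) N * NM Y.
Proof.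
move=> M0 HM; rewrite /Eps; apply: le_trans (NM_sum _ _) _.
rewrite /series /= big_mkord mulr_suml; apply: ler_sum => k _; rewrite NMRZ.
apply: le_trans (ler_wpM2l (normr_ge0 _) (@iter_bound _ _ L M k Y M0 HM)) _.
by rewrite -(coeff_norm x k M0) mulrA.
Qed.

Lemma expL_shift (R : realType) d (L : 'M[R[i]]_d -> 'M[R[i]]_d) (M : R) rho t0 x :
  linL L -> 0 <= M -> (forall X, NM (L X) <= M * NM X) ->
  NM (Eps L (expL t0 L rho) x N - expL (t0 + x) L rho) @[N --> \oo] --> 0.
Proof.
move=> hL M0 HM.
set s := expL t0 L rho; set V := expL (t0 + x) L rho.
set a := `|x| * M; set b := `|t0| * M.
have a0 : 0 <= a by rewrite /a mulr_ge0.
pose g1 N := expR a * NM (Eps L rho t0 N - s).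
pose g2 N := NM rho * (series (exp_coeff a) N * series (exp_coeff b) N
                       - series (exp_coeff (a + b)) N).
pose g3 N := NM (Eps L rho (t0 + x) N - V).
apply: (@squeeze_cvgr _ _ _ _ (fun _ => 0) (fun N => g1 N + g2 N + g3 N)).
- apply: nearW => N; apply/andP; split; first exact: NM_ge0.
  rewrite (tri3 _ (Eps L (Eps L rho t0 N) x N) (Eps L rho (t0 + x) N)).
  apply: le_trans (NMD _ _) _; apply: lerD; last by [].
  apply: le_trans (NMD _ _) _; apply: lerD; last exact: term2_bound.
  rewrite Eps_B // /g1 NMB.
  apply: le_trans (Eps_NM_le _ _ _ M0 HM) _.
  rewrite (NMB s); apply: ler_wpM2r; first exact: NM_ge0.
  exact: series_exp_le.
- exact: cvg_cst.
- have c1 : g1 N @[N --> \oo] --> 0.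
    rewrite -(mulr0 (expR a)); apply: cvgM; first exact: cvg_cst.
    exact: Eps_NM_cvg M0 HM.
  have c2 : g2 N @[N --> \oo] --> 0.
    rewrite (_ : 0 = NM rho * (expR a * expR b - expR (a + b))); last first.
      by rewrite -expRD subrr mulr0.
    apply: cvgM; first exact: cvg_cst.
    apply: cvgB; last exact: series_exp_cvg.
    apply: cvgM; exact: series_exp_cvg.
  have c3 : g3 N @[N --> \oo] --> 0 by exact: Eps_NM_cvg M0 HM.
  have : (g1 N + g2 N + g3 N) @[N --> \oo] --> 0 + 0 + 0.
    by apply: cvgD; [apply: cvgD|].
  by rewrite !addr0.
Qed.

Lemma cvg_by_bound (R : realType) (u w : nat -> R) l :
  (forall n, `|u n - l| <= w n) -> w n @[n --> \oo] --> 0 -> u n @[n --> \oo] --> l.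
Proof.
move=> Hb Hw.
have H0 : (u n - l) @[n --> \oo] --> 0.
  apply: (@squeeze_cvgr _ _ _ _ (fun n => - w n) (fun n => w n)).
  - by apply: nearW => n; rewrite -ler_norml.
  - by rewrite -oppr0; apply: cvgN.
  - exact: Hw.
rewrite -(@eq_cvg _ _ \oo (fun n => u n - l + l) u _ (fun n => subrK l (u n))).
have H1 : (u n - l + l) @[n --> \oo] --> 0 + l by apply: cvgD; [exact: H0 | exact: cvg_cst].
by rewrite add0r in H1.
Qed.

Lemma Eps_ReIm_entry (R : realType) d (L : 'M[R[i]]_d -> 'M[R[i]]_d) s (x : R) N i j :
  complex.Re (Eps L s x N i j) =
    \sum_(k < N) (complex.Re (iter k L s i j) / (k`!)%:R) * x ^+ k /\
  complex.Im (Eps L s x N i j) =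
    \sum_(k < N) (complex.Im (iter k L s i j) / (k`!)%:R) * x ^+ k.
Proof.
rewrite Eps_entry Re_sum Im_sum; split; apply: eq_bigr => k _.
  by rewrite ReRM; ring.
by rewrite ImRM; ring.
Qed.

Lemma expL_ra (R : realType) d (L : 'M[R[i]]_d -> 'M[R[i]]_d) rho i j :
  is_lindbladian L ->
  real_analytic_on_nonneg (fun t => complex.Re (expL t L rho i j)) /\
  real_analytic_on_nonneg (fun t => complex.Im (expL t L rho i j)).
Proof.
move=> HL; have hL := lind_lin HL.
have [M [M0 HM]] := linL_bound hL.
split => t0 _; exists 1; split => //.
- exists (fun k => complex.Re (iter k L (expL t0 L rho) i j) / (k`!)%:R) => t _ _.
  have -> : t = t0 + (t - t0) by rewrite addrC subrK.
  set x := t - t0.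
  have ex : t0 + x - t0 = x by ring.
  rewrite ex.
  have -> : (fun N => \sum_(k < N) complex.Re (iter k L (expL t0 L rho) i j) / (k`!)%:R * x ^+ k)
     = (fun N => complex.Re (Eps L (expL t0 L rho) x N i j)).
    by apply/funext => N; rewrite (Eps_ReIm_entry L (expL t0 L rho) x N i j).1.
  apply: cvg_by_bound (expL_shift rho t0 x hL M0 HM) => N.
  have e : (Eps L (expL t0 L rho) x N - expL (t0 + x) L rho) i j =
           Eps L (expL t0 L rho) x N i j - expL (t0 + x) L rho i j by rewrite !mxE.
  by rewrite -ReB -e; exact: Re_le_NM.
- exists (fun k => complex.Im (iter k L (expL t0 L rho) i j) / (k`!)%:R) => t _ _.
  have -> : t = t0 + (t - t0) by rewrite addrC subrK.
  set x := t - t0.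
  have ex : t0 + x - t0 = x by ring.
  rewrite ex.
  have -> : (fun N => \sum_(k < N) complex.Im (iter k L (expL t0 L rho) i j) / (k`!)%:R * x ^+ k)
     = (fun N => complex.Im (Eps L (expL t0 L rho) x N i j)).
    by apply/funext => N; rewrite (Eps_ReIm_entry L (expL t0 L rho) x N i j).2.
  apply: cvg_by_bound (expL_shift rho t0 x hL M0 HM) => N.
  have e : (Eps L (expL t0 L rho) x N - expL (t0 + x) L rho) i j =
           Eps L (expL t0 L rho) x N i j - expL (t0 + x) L rho i j by rewrite !mxE.
  by rewrite -ImB -e; exact: Im_le_NM.
Qed.

Lemma tensD (R : realType) m n p q (A : 'M[R[i]]_(m, n)) (B1 B2 : 'M[R[i]]_(p, q)) :
  A *t (B1 + B2) = A *t B1 + A *t B2.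
Proof. by apply/matrixP => a b; rewrite !mxE mulrDr. Qed.

Lemma tensZ (R : realType) m n p q (A : 'M[R[i]]_(m, n)) c (B : 'M[R[i]]_(p, q)) :
  A *t (c *: B) = c *: (A *t B).
Proof. by apply/matrixP => a b; rewrite !mxE mulrCA. Qed.

Lemma tens_sum (R : realType) m n p q (A : 'M[R[i]]_(m, n)) (I : Type) (r : seq I)
  (F : I -> 'M[R[i]]_(p, q)) :
  A *t (\sum_(k <- r) F k) = \sum_(k <- r) A *t F k.
Proof.
elim: r => [|k r IH]; first by rewrite !big_nil tensmx0.
by rewrite !big_cons tensD IH.
Qed.

Lemma P_ra (R : realType) (d p : nat) (pi : R -> 'M[R[i]]_p)
  (P : {linear 'M[R[i]]_(d * p) -> 'M[R[i]]_d}) (rho : 'M[R[i]]_d) i j :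
  mx_real_analytic_on_nonneg pi ->
  real_analytic_on_nonneg (fun t => complex.Re (P (rho *t pi t) i j)) /\
  real_analytic_on_nonneg (fun t => complex.Im (P (rho *t pi t) i j)).
Proof.
move=> Hpi.
pose Q a b := P (rho *t delta_mx a b).
have E : forall t, P (rho *t pi t) i j = \sum_a \sum_b pi t a b * Q a b i j.
  move=> t; rewrite {1}(matrix_sum_delta (pi t)) tens_sum linear_sum summxE.
  apply: eq_bigr => a _; rewrite tens_sum linear_sum summxE.
  by apply: eq_bigr => b _; rewrite tensZ linearZ mxE.
split.
- have -> : (fun t => complex.Re (P (rho *t pi t) i j)) =
    (fun t => \sum_a \sum_b (complex.Re (Q a b i j) * complex.Re (pi t a b) +
                             (- complex.Im (Q a b i j)) * complex.Im (pi t a b))).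
    apply/funext => t; rewrite E Re_sum; apply: eq_bigr => a _.
    by rewrite Re_sum; apply: eq_bigr => b _; rewrite ReM; ring.
  apply: ra_sum => a; apply: ra_sum => b; apply: ra_add; apply: ra_scale.
    exact: (Hpi a b).1.
  exact: (Hpi a b).2.
- have -> : (fun t => complex.Im (P (rho *t pi t) i j)) =
    (fun t => \sum_a \sum_b (complex.Im (Q a b i j) * complex.Re (pi t a b) +
                             complex.Re (Q a b i j) * complex.Im (pi t a b))).
    apply/funext => t; rewrite E Im_sum; apply: eq_bigr => a _.
    by rewrite Im_sum; apply: eq_bigr => b _; rewrite ImM; ring.
  apply: ra_sum => a; apply: ra_sum => b; apply: ra_add; apply: ra_scale.
    exact: (Hpi a b).1.
  exact: (Hpi a b).2.
Qed.

Unset Implicit Arguments.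

Theorem lemma14 (R : realType) (d p : nat)
  (L : 'M[R[i]]_d -> 'M[R[i]]_d)
  (pi : R -> 'M[R[i]]_p)
  (P : {linear 'M[R[i]]_(d * p) -> 'M[R[i]]_d})
  (T : R) :
  is_lindbladian L ->
  (forall t : R, 0 <= t -> density (pi t)) ->
  mx_real_analytic_on_nonneg pi ->
  0 < T ->
  (forall t : R, 0 <= t -> t <= T ->
     forall rho : 'M[R[i]]_d, P (rho *t pi t) = expL t L rho) ->
  forall t : R, T <= t ->
    forall rho : 'M[R[i]]_d, P (rho *t pi t) = expL t L rho.
Proof.
move=> HL _ Hpi T0 HT t Tt rho.
have t0 : 0 <= t by apply: le_trans Tt; exact: ltW.
apply/matrixP => i j; apply/eqP; rewrite eq_complex; apply/andP; split; apply/eqP.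
- have Hra := ra_sub (P_ra P rho i j Hpi).1 (expL_ra rho i j HL).1.
  have := @ra_identity _ _ T Hra T0 _ t t0.
  move=> H; apply/eqP; rewrite -subr_eq0; apply/eqP; apply: H.
  by move=> u u0 uT; rewrite (HT u u0 uT rho) subrr.
- have Hra := ra_sub (P_ra P rho i j Hpi).2 (expL_ra rho i j HL).2.
  have := @ra_identity _ _ T Hra T0 _ t t0.
  move=> H; apply/eqP; rewrite -subr_eq0; apply/eqP; apply: H.
  by move=> u u0 uT; rewrite (HT u u0 uT rho) subrr.
Qed.
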